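(* Let $\alpha\in[0,1]$ and set $\sigma=25\alpha+10$, $r=28-35\alpha$, $b=\frac{\alpha+8}{3}$, $\gamma=29\alpha-1$, $x_r=\sqrt{(8+\alpha)(9-2\alpha)}$, and $E_+=(x_r,x_r,x_r^2/b)=\big(\sqrt{(8+\alpha)(9-2\alpha)},\sqrt{(8+\alpha)(9-2\alpha)},27-6\alpha\big)$. Consider the controlled system $$\begin{aligned}\dot x(t)&=\sigma\,(y(t)-x(t)),\\ \dot y(t)&=r\,[x(t)-x(t-\tau)]-[x(t)z(t)-x(t-\tau)z(t-\tau)]+\gamma\,[y(t)-y(t-\tau)]-\sigma\,[y(t-\tau)-x_r],\\ \dot z(t)&=x(t)y(t)-b\,z(t),\end{aligned}$$ with delay $\tau=0$; that is, the ODE system $\dot x=\sigma(y-x)$, $\dot y=-\sigma(y-x_r)$, $\dot z=xy-bz$. Then, for every $\alpha\in[0,1]$, $E_+$ is a globally asymptotically stable equilibrium of this system.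
   Context: The system above is the generalized Lorenz system $\dot x=\sigma(y-x)$, $\dot y=rx-xz+\gamma y$, $\dot z=xy-bz$ to which the delayed feedback control $u=-rx(t-\tau)+x(t-\tau)z(t-\tau)-\gamma y(t-\tau)-\sigma[y(t-\tau)-x_r]$ has been added in the $y$-equation; $E_+$ is a nontrivial equilibrium of the uncontrolled system and an equilibrium of the controlled one. *)

(* Defs.v *)
From Stdlib Require Import Reals.
From Coquelicot Require Import Coquelicot.
Open Scope R_scope.

Definition sigma_p (a : R) : R := 25 * a + 10.
Definition r_p (a : R) : R := 28 - 35 * a.
Definition b_p (a : R) : R := (a + 8) / 3.
Definition gamma_p (a : R) : R := 29 * a - 1.
Definition x_r (a : R) : R := sqrt ((8 + a) * (9 - 2 * a)).

Definition Eplus_x (a : R) : R := x_r a.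
Definition Eplus_y (a : R) : R := x_r a.
Definition Eplus_z (a : R) : R := (x_r a) ^ 2 / b_p a.

(* Right-hand sides of the controlled system, with current state (x,y,z)
   and delayed state (xd,yd,zd) = (x,y,z)(t - tau). *)
Definition fx (a x y z xd yd zd : R) : R := sigma_p a * (y - x).
Definition fy (a x y z xd yd zd : R) : R :=
  r_p a * (x - xd) - (x * z - xd * zd) + gamma_p a * (y - yd)
  - sigma_p a * (yd - x_r a).
Definition fz (a x y z xd yd zd : R) : R := x * y - b_p a * z.

(* A (forward) solution of the controlled system with delay tau = 0:
   the delayed state equals the current state. *)
Definition is_solution0 (a : R) (x y z : R -> R) : Prop :=
  forall t, 0 <= t ->
    is_derive x t (fx a (x t) (y t) (z t) (x t) (y t) (z t)) /\
    is_derive y t (fy a (x t) (y t) (z t) (x t) (y t) (z t)) /\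
    is_derive z t (fz a (x t) (y t) (z t) (x t) (y t) (z t)).

Definition dist_E (a : R) (x y z : R -> R) (t : R) : R :=
  sqrt ((x t - Eplus_x a) ^ 2 + (y t - Eplus_y a) ^ 2 + (z t - Eplus_z a) ^ 2).

Definition is_equilibrium0 (a : R) : Prop :=
  let ex := Eplus_x a in let ey := Eplus_y a in let ez := Eplus_z a in
  fx a ex ey ez ex ey ez = 0 /\ fy a ex ey ez ex ey ez = 0 /\
  fz a ex ey ez ex ey ez = 0.

Definition GAS0 (a : R) : Prop :=
  is_equilibrium0 a /\
  (forall eps, 0 < eps -> exists delta, 0 < delta /\
     forall x y z, is_solution0 a x y z -> dist_E a x y z 0 < delta ->
       forall t, 0 <= t -> dist_E a x y z t < eps) /\
  (forall x y z, is_solution0 a x y z ->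
     is_lim (dist_E a x y z) p_infty 0).

(* Main.v *)
Require Import Defs.
From Stdlib Require Import Reals Lra.
From Coquelicot Require Import Coquelicot.
Open Scope R_scope.
Lemma deq (f : R -> R) t (l l' : R) : is_derive f t l -> l = l' -> is_derive f t l'.
Proof. intros H ->; exact H. Qed.
Lemma d_sq (f : R -> R) c t df : is_derive f t df ->
  is_derive (fun s => (f s - c)^2) t (2*(f t - c)*df).
Proof.
intros Hf.
pose proof (is_derive_minus (K:=R_AbsRing) (V:=R_NormedModule) f (fun _ => c) t df zero Hf (is_derive_const _ _)) as H1.
pose proof (is_derive_mult _ _ t _ _ H1 H1 Rmult_comm) as H2.
simpl in H2.
eapply deq.
- eapply is_derive_ext; [|exact H2]. intros s. simpl. unfold minus, plus, opp, mult; simpl. ring.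
- unfold minus, plus, opp, mult, zero; simpl. ring.
Qed.
Lemma decr (g dg : R -> R) : (forall t, 0 <= t -> is_derive g t (dg t)) ->
  (forall t, 0 <= t -> dg t <= 0) -> forall t, 0 <= t -> g t <= g 0.
Proof.
intros Hd Hn t Ht.
destruct (MVT_gen g 0 t dg) as [c [Hc E]].
- intros s Hs. apply Hd. rewrite Rmin_left in Hs; lra.
- intros s Hs. apply continuity_pt_filterlim.
  assert (Hex : ex_derive g s) by (exists (dg s); apply Hd; rewrite Rmin_left in Hs; lra).
  exact (ex_derive_continuous (K:=R_AbsRing) (V:=R_NormedModule) g s Hex).
- rewrite Rmin_left in Hc; try lra. rewrite Rmax_right in Hc; try lra.
  assert (dg c <= 0) by (apply Hn; lra). assert (0 <= - dg c * (t-0)) by (apply Rmult_le_pos; lra). lra.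
Qed.
Lemma d_plus (f g : R -> R) t df dg : is_derive f t df -> is_derive g t dg ->
  is_derive (fun s => f s + g s) t (df + dg).
Proof. intros Hf Hg. exact (is_derive_plus f g t df dg Hf Hg). Qed.
Lemma d_scal (f : R -> R) K t df : is_derive f t df ->
  is_derive (fun s => K * f s) t (K * df).
Proof. intros Hf. exact (is_derive_scal f t K df Hf). Qed.
Lemma d_mexp (f : R -> R) t df : is_derive f t df ->
  is_derive (fun s => f s * exp s) t (df * exp t + f t * exp t).
Proof. intros Hf. exact (is_derive_mult f exp t df (exp t) Hf (is_derive_exp t) Rmult_comm). Qed.
Lemma key u v w X s bb M : 2 <= s -> 1 <= bb -> u^2+v^2 <= M ->
 2*w*(u*v + X*(u+v) - bb*w) + (M/2 + 4*X^2 + 1)*(2*(u-0)*(s*(v-u)) + 2*(v-0)*(-(s*v)))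
  + (w^2 + (M/2 + 4*X^2 + 1)*(u^2+v^2)) <= 0.
Proof.
intros Hs Hb HP.
remember (M/2 + 4*X^2 + 1) as K eqn:HKd.
remember (u^2+v^2) as P eqn:HPd. remember (u*v + X*(u+v)) as g eqn:Hgd.
assert (HP0 : 0 <= P) by (rewrite HPd; nra).
assert (H1 : 2*w*g <= w^2 + g^2) by (assert (0 <= (w-g)^2) by apply pow2_ge_0; nra).
assert (H2 : (u*v)^2 <= M*P/4).
{ assert (0 <= (u^2-v^2)^2) by apply pow2_ge_0. assert ((u*v)^2 <= P^2/4) by (rewrite HPd; nra).
  assert (P*P <= M*P) by (apply Rmult_le_compat_r; lra). nra. }
assert (H3 : (u+v)^2 <= 2*P) by (assert (0 <= (u-v)^2) by apply pow2_ge_0; rewrite HPd; nra).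
assert (H4 : g^2 <= 2*(u*v)^2 + 2*X^2*(u+v)^2) by (assert (0 <= (u*v - X*(u+v))^2) by apply pow2_ge_0; rewrite Hgd; nra).
assert (HX : 0 <= X^2) by nra.
assert (H5 : g^2 <= (K-1)*P).
{ rewrite HKd. assert (X^2*(u+v)^2 <= X^2*(2*P)) by (apply Rmult_le_compat_l; lra). nra. }
assert (HK : 1 <= K) by (rewrite HKd; assert (0 <= M) by lra; lra).
assert (H6 : 2*u*(s*(v-u)) + 2*v*(-(s*v)) <= - s*P) by (assert (0 <= s*(u-v)^2) by (apply Rmult_le_pos; [lra|apply pow2_ge_0]); rewrite HPd; nra).
assert (H7 : K*(2*(u-0)*(s*(v-u)) + 2*(v-0)*(-(s*v))) <= K*(-s*P)).
{ apply Rmult_le_compat_l; [lra|]. replace (u-0) with u by ring. replace (v-0) with v by ring. lra. }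
assert (H8 : K*(-s*P) <= - 2*K*P) by (assert (0 <= K*P*(s-2)) by (apply Rmult_le_pos; [apply Rmult_le_pos|]; lra); nra).
assert (H9 : bb*w^2 >= w^2) by (assert (0 <= (bb-1)*w^2) by (apply Rmult_le_pos; [lra|apply pow2_ge_0]); nra).
nra.
Qed.

Lemma sol_bound a x y z : 0 <= a <= 1 -> is_solution0 a x y z -> forall t, 0 <= t ->
 ((z t - Eplus_z a)^2 + (((x 0 - x_r a)^2 + (y 0 - x_r a)^2)/2 + 4*(x_r a)^2+1)
    *((x t - x_r a)^2+(y t - x_r a)^2)) * exp t
 <= (z 0 - Eplus_z a)^2 + (((x 0 - x_r a)^2 + (y 0 - x_r a)^2)/2 + 4*(x_r a)^2+1)
    *((x 0 - x_r a)^2+(y 0 - x_r a)^2).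
Proof.
intros Ha Hsol.
set (X := x_r a). set (Z := Eplus_z a). set (s := sigma_p a). set (bb := b_p a).
assert (Hs : 2 <= s) by (unfold s, sigma_p; lra).
assert (Hb : 1 <= bb) by (unfold bb, b_p; lra).
assert (HZ : bb * Z = X * X) by (unfold Z, Eplus_z, X; fold bb; field; lra).
assert (Hx : forall t, 0 <= t -> is_derive x t (s*(y t - x t))).
{ intros t Ht. destruct (Hsol t Ht) as [H _]. exact H. }
assert (Hy : forall t, 0 <= t -> is_derive y t (-(s*(y t - X)))).
{ intros t Ht. destruct (Hsol t Ht) as [_ [H _]]. eapply deq; [exact H|].
  unfold fy; fold s X; ring. }
assert (Hz : forall t, 0 <= t -> is_derive z t
   ((x t - X)*(y t - X) + X*((x t - X)+(y t - X)) - bb*(z t - Z))).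
{ intros t Ht. destruct (Hsol t Ht) as [_ [_ H]]. eapply deq; [exact H|].
  unfold fz; fold bb. replace (bb * (z t - Z)) with (bb * z t - X*X) by (rewrite <- HZ; ring). ring. }
set (P0 := (x 0 - X)^2 + (y 0 - X)^2).
assert (HP : forall t, 0 <= t -> (x t - X)^2 + (y t - X)^2 <= P0).
{ apply (decr (fun t => (x t - X)^2 + (y t - X)^2)
     (fun t => 2*(x t - X)*(s*(y t - x t)) + 2*(y t - X)*(-(s*(y t - X))))).
  - intros t Ht. apply d_plus; apply d_sq; auto.
  - intros t Ht. assert (0 <= s*((x t - y t)^2 + (x t - X)^2 + (y t - X)^2)) by (apply Rmult_le_pos; [lra| repeat apply Rplus_le_le_0_compat; apply pow2_ge_0]).
    assert (2*(x t - X)*(s*(y t - x t)) + 2*(y t - X)*(-(s*(y t - X))) = -(s*((x t - y t)^2 + (x t - X)^2 + (y t - X)^2))) by ring.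
    lra. }
set (K := P0/2 + 4*X^2+1).
assert (E := decr (fun t => ((z t - Z)^2 + K*((x t - X)^2+(y t - X)^2)) * exp t)
  (fun t => exp t * (2*(z t - Z)*((x t - X)*(y t - X) + X*((x t - X)+(y t - X)) - bb*(z t - Z))
     + K*(2*(x t - X)*(s*(y t - x t)) + 2*(y t - X)*(-(s*(y t - X))))
     + ((z t - Z)^2 + K*((x t - X)^2+(y t - X)^2))))).
intros t Ht. eapply Rle_trans; [apply E; auto|].
- intros t' Ht'. eapply deq. apply d_mexp. apply d_plus. apply d_sq; auto.
  apply d_scal. apply d_plus; apply d_sq; auto. simpl. ring.
- intros t' Ht'.
  assert (Hk := key (x t' - X) (y t' - X) (z t' - Z) X s bb P0 Hs Hb (HP t' Ht')).
  assert (Hq : 2*(z t' - Z)*((x t' - X)*(y t' - X) + X*((x t' - X)+(y t' - X)) - bb*(z t' - Z))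
     + K*(2*(x t' - X)*(s*(y t' - x t')) + 2*(y t' - X)*(-(s*(y t' - X))))
     + ((z t' - Z)^2 + K*((x t' - X)^2+(y t' - X)^2)) <= 0).
  { eapply Rle_trans; [|exact Hk]. right. unfold K. ring. }
  pose proof (exp_pos t'). nra.
- cbv beta. rewrite exp_0. right. unfold P0. ring.
Qed.

Lemma arith1 u2 w2 P0 X2 e W0 : 0 < e -> 0 <= P0 -> 0 <= X2 -> 0 <= u2 ->
  (w2 + (P0/2+4*X2+1)*u2)*e <= W0 -> (u2+w2)*e <= W0.
Proof.
intros He HP HX Hu H.
assert (0 <= (P0/2+4*X2)*u2*e) by (apply Rmult_le_pos; [apply Rmult_le_pos|]; lra).
assert ((w2 + (P0/2+4*X2+1)*u2)*e = (u2+w2)*e + (P0/2+4*X2)*u2*e) by ring.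
lra.
Qed.
Lemma arith_stab D e P0 w2 X2 de eps : 0 <= D -> 1 <= e -> 0 <= P0 -> 0 <= w2 -> 0 <= X2 ->
  P0 + w2 < de^2 -> 0 <= de -> de <= 1 -> de <= eps/(1/2+4*X2+1) -> 0 < eps ->
  D*e <= w2 + (P0/2+4*X2+1)*P0 -> D < eps^2.
Proof.
intros HD He HP Hw HX Hd Hde Hde1 Hde2 Heps H.
set (K1 := 1/2+4*X2+1) in *.
assert (HK1 : 1 <= K1) by (unfold K1; lra).
assert (H1 : D <= D*e) by (assert (0 <= D*(e-1)) by (apply Rmult_le_pos; lra); lra).
assert (HP1 : P0 < 1) by (assert (de^2 <= 1) by (simpl; assert (de*de <= 1*1) by (apply Rmult_le_compat; lra); lra); lra).
assert (H2 : (P0/2+4*X2+1)*P0 <= K1*P0) by (apply Rmult_le_compat_r; unfold K1; lra).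
assert (H3 : w2 <= K1*w2) by (assert (0 <= (K1-1)*w2) by (apply Rmult_le_pos; lra); lra).
assert (H4 : K1*(P0+w2) < K1*de^2) by (apply Rmult_lt_compat_l; lra).
assert (H5 : de^2 <= (eps/K1)^2) by (apply pow_incr; lra).
assert (H6 : K1 * (eps/K1)^2 = eps^2/K1) by (field; lra).
assert (H7 : eps^2/K1 <= eps^2).
{ assert (0 < eps^2) by (apply pow_lt; lra).
  unfold Rdiv. rewrite <- (Rmult_1_r (eps^2)) at 2. apply Rmult_le_compat_l; [lra|].
  rewrite <- Rinv_1. apply Rinv_le_contravar; lra. }
assert (H8 : K1*de^2 <= K1*(eps/K1)^2) by (apply Rmult_le_compat_l; lra).
lra.
Qed.
Lemma arith_lim D e C t ep : 0 <= D -> 0 <= C -> 1 + t <= e -> 0 < ep -> C/ep^2 < t -> 0 <= t ->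
  D * e <= C -> D < ep^2.
Proof.
intros HD HC He Hep Ht Ht0 H.
assert (Hp : 0 < ep^2) by (apply pow_lt; lra).
assert (H1 : C < ep^2 * t).
{ assert (C/ep^2 * ep^2 = C) by (field; lra).
  assert (C/ep^2 * ep^2 < t * ep^2) by (apply Rmult_lt_compat_r; lra). lra. }
assert (H2 : D*(1+t) <= D*e) by (apply Rmult_le_compat_l; lra).
destruct (Rlt_or_le D (ep^2)) as [|Hc]; [assumption|].
assert (ep^2*(1+t) <= D*(1+t)) by (apply Rmult_le_compat_r; lra).
lra.
Qed.

Theorem theorem1 : forall a : R, 0 <= a <= 1 -> GAS0 a.
Proof.
intros a Ha.
assert (Hb0 : b_p a <> 0) by (unfold b_p; lra).
split.
{ unfold is_equilibrium0, fx, fy, fz, Eplus_x, Eplus_y, Eplus_z.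
  split; [ring|split; [ring|field; exact Hb0]]. }
set (X := x_r a).
assert (HX2 : 0 <= X^2) by apply pow2_ge_0.
assert (Hd : forall x y z t, dist_E a x y z t = sqrt (((x t - X)^2 + (y t - X)^2) + (z t - Eplus_z a)^2)).
{ intros. reflexivity. }
assert (G : forall x y z, is_solution0 a x y z -> forall t, 0 <= t ->
  (((x t - X)^2 + (y t - X)^2) + (z t - Eplus_z a)^2) * exp t
  <= (z 0 - Eplus_z a)^2 + (((x 0 - X)^2 + (y 0 - X)^2)/2 + 4*X^2 + 1) * ((x 0 - X)^2 + (y 0 - X)^2)).
{ intros x y z Hsol t Ht.
  pose proof (sol_bound a x y z Ha Hsol t Ht) as B. fold X in B.
  apply (arith1 _ _ (((x 0 - X)^2 + (y 0 - X)^2)) (X^2)); auto.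
  apply exp_pos. apply Rplus_le_le_0_compat; apply pow2_ge_0.
  apply Rplus_le_le_0_compat; apply pow2_ge_0. }
split.
- intros eps Heps.
  exists (Rmin 1 (eps/(1/2+4*X^2+1))). split.
  { apply Rmin_glb_lt; [lra|]. apply Rdiv_lt_0_compat; lra. }
  intros x y z Hsol H0 t Ht.
  rewrite Hd in H0 |- *.
  assert (HD0 : 0 <= ((x 0 - X)^2 + (y 0 - X)^2) + (z 0 - Eplus_z a)^2)
    by (repeat apply Rplus_le_le_0_compat; apply pow2_ge_0).
  assert (HD0d : ((x 0 - X)^2 + (y 0 - X)^2) + (z 0 - Eplus_z a)^2 < (Rmin 1 (eps/(1/2+4*X^2+1)))^2).
  { pose proof (sqrt_sqrt _ HD0). pose proof (sqrt_pos (((x 0 - X)^2 + (y 0 - X)^2) + (z 0 - Eplus_z a)^2)).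
    set (m := Rmin 1 (eps/(1/2+4*X^2+1))) in *. rewrite <- H. replace (m^2) with (m*m) by ring.
    apply Rmult_le_0_lt_compat; lra. }
  assert (Hlt : ((x t - X)^2 + (y t - X)^2) + (z t - Eplus_z a)^2 < eps^2).
  { apply (arith_stab _ (exp t) ((x 0 - X)^2 + (y 0 - X)^2) ((z 0 - Eplus_z a)^2) (X^2) (Rmin 1 (eps/(1/2+4*X^2+1))) eps).
    - repeat apply Rplus_le_le_0_compat; apply pow2_ge_0.
    - pose proof (exp_ineq1_le t). lra.
    - apply Rplus_le_le_0_compat; apply pow2_ge_0.
    - apply pow2_ge_0.
    - exact HX2.
    - exact HD0d.
    - pose proof (sqrt_pos (((x 0 - X)^2 + (y 0 - X)^2) + (z 0 - Eplus_z a)^2)). lra.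
    - apply Rmin_l.
    - apply Rmin_r.
    - exact Heps.
    - apply G; auto. }
  rewrite <- (sqrt_pow2 eps) by lra. apply sqrt_lt_1_alt. split; [|exact Hlt].
  repeat apply Rplus_le_le_0_compat; apply pow2_ge_0.
- intros x y z Hsol.
  apply is_lim_spec. intros ep.
  pose proof (cond_pos ep) as Hep.
  set (C := (z 0 - Eplus_z a)^2 + (((x 0 - X)^2 + (y 0 - X)^2)/2 + 4*X^2 + 1) * ((x 0 - X)^2 + (y 0 - X)^2)).
  assert (HC : 0 <= C).
  { unfold C. apply Rplus_le_le_0_compat. apply pow2_ge_0. apply Rmult_le_pos.
    assert (0 <= (x 0 - X)^2 + (y 0 - X)^2) by (apply Rplus_le_le_0_compat; apply pow2_ge_0). lra.
    apply Rplus_le_le_0_compat; apply pow2_ge_0. }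
  exists (Rmax 0 (C/ep^2)). intros t Ht.
  assert (Ht0 : 0 <= t) by (pose proof (Rmax_l 0 (C/ep^2)); lra).
  assert (HtC : C/ep^2 < t) by (pose proof (Rmax_r 0 (C/ep^2)); lra).
  rewrite Hd. rewrite Rminus_0_r.
  assert (Hlt : ((x t - X)^2 + (y t - X)^2) + (z t - Eplus_z a)^2 < ep^2).
  { apply (arith_lim _ (exp t) C t ep).
    - repeat apply Rplus_le_le_0_compat; apply pow2_ge_0.
    - exact HC.
    - apply exp_ineq1_le.
    - exact Hep.
    - exact HtC.
    - exact Ht0.
    - apply G; auto. }
  rewrite Rabs_pos_eq by apply sqrt_pos.
  rewrite <- (sqrt_pow2 ep) by lra. apply sqrt_lt_1_alt. split; [|exact Hlt].
  repeat apply Rplus_le_le_0_compat; apply pow2_ge_0.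
Qed.
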